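(* Let $(S,d)$ be a complete metric space with a Hausdorff topology $\sigma$ compatible with $d$, and let $\phi,\phi_\epsilon:S\to(-\infty,+\infty]$ ($\epsilon>0$) have nonempty effective domains. Suppose there exist $A,B>0$, $u_\star\in S$ with $\phi_\epsilon(\cdot)\ge-A-Bd^2(\cdot,u_\star)$ for all $\epsilon>0$; that each $\phi_\epsilon$ satisfies (i) $\sup_{n,m}d(u_n,u_m)<+\infty$, $u_n\stackrel{\sigma}{\rightharpoonup}u$ $\Rightarrow$ $\liminf_n\phi_\epsilon(u_n)\ge\phi_\epsilon(u)$, and (ii) $\sup_{n,m}\{d(u_n,u_m),\phi_\epsilon(u_n)\}<+\infty$ $\Rightarrow$ some subsequence of $(u_n)$ $\sigma$-converges in $S$; and that the local slopes satisfy: whenever $\epsilon_n\to0$ and $u_n\stackrel{\sigma}{\rightharpoonup}u$, $\liminf_n|\partial\phi_{\epsilon_n}|(u_n)\ge|\partial\phi|(u)$. Then for every choice $\epsilon(\tau)>0$ with $\epsilon(\tau)\to0$ as $\tau\to0$: for all $u,u_\tau\in S$ with $u_\tau\stackrel{\sigma}{\rightharpoonup}u$ and $\sup_\tau\{\phi_{\epsilon(\tau)}(u_\tau),d(u_\tau,u)\}<+\infty$, $$\liminf_{\tau\to0}\frac{\phi_{\epsilon(\tau)}(u_\tau)-\mathcal{Y}_\tau\phi_{\epsilon(\tau)}(u_\tau)}{\tau}\ge\frac12|\partial^-\phi|^2(u).$$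
   Context: $\sigma$ compatible with $d$: if $u_n\stackrel{\sigma}{\rightharpoonup}u$, $v_n\stackrel{\sigma}{\rightharpoonup}v$ then $\liminf_n d(u_n,v_n)\ge d(u,v)$; if $d(u_n,v_n)\to0$ and $u_n\stackrel{\sigma}{\rightharpoonup}u$ then $v_n\stackrel{\sigma}{\rightharpoonup}u$. Local slope $|\partial f|(v)=\limsup_{w\stackrel{d}{\to}v}\frac{(f(v)-f(w))^+}{d(v,w)}$ for $f(v)<\infty$; relaxed slope $|\partial^-f|(u)=\inf\{\liminf_n|\partial f|(u_n): u_n\stackrel{\sigma}{\rightharpoonup}u,\ \sup_n\{d(u_n,u),f(u_n)\}<+\infty\}$; $\mathcal{Y}_\tau f(u)=\inf_{v\in S}\{f(v)+\frac1{2\tau}d^2(v,u)\}$. *)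

(* Defs.v *)
From HB Require Import structures.
From mathcomp Require Import all_boot all_order all_algebra.
From mathcomp Require Import all_classical all_reals all_analysis.
Set Implicit Arguments. Unset Strict Implicit. Unset Printing Implicit Defensive.
Import Order.TTheory GRing.Theory Num.Theory.
Import numFieldNormedType.Exports.
Local Open Scope classical_set_scope.
Local Open Scope ring_scope.

Section Defs.
Context {R : realType} {S : topologicalType}.
Implicit Types (d : S -> S -> R).

Definition is_metric d : Prop :=
  [/\ forall x y, 0 <= d x y,
      forall x y, d x y = 0 <-> x = y,
      forall x y, d x y = d y x &
      forall x y z, d x z <= d x y + d y z].

Definition d_complete d : Prop :=
  forall u : nat -> S,
    (forall e : R, 0 < e -> exists N : nat, forall n m : nat,
        (N <= n)%N -> (N <= m)%N -> d (u n) (u m) < e) ->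
    exists x : S, (fun n => d (u n) x) @ \oo --> (0 : R).

Definition sigma_compatible d : Prop :=
  (forall (u v : nat -> S) (x y : S), u @ \oo --> x -> v @ \oo --> y ->
     (d x y)%:E <= limn_einf (fun n => (d (u n) (v n))%:E))%E /\
  (forall (u v : nat -> S) (x : S),
     (fun n => d (u n) (v n)) @ \oo --> (0 : R) -> u @ \oo --> x -> v @ \oo --> x).

(* local slope |∂f|(v); convention: +oo outside the effective domain,
   and 0 at d-isolated points *)
Definition slope d (f : S -> \bar R) (v : S) : \bar R :=
  if f v == +oo%E then +oo%E else
  ereal_inf [set ereal_sup ([set 0%E] `|`
      [set (maxe (f v - f w) 0 * ((d v w)^-1)%:E)%E | w in [set w | 0 < d v w < r]])
    | r in [set r : R | 0 < r]].

Definition relaxed_slope d (f : S -> \bar R) (u : S) : \bar R :=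
  ereal_inf [set limn_einf (fun n => slope d f (un n)) | un in
    [set un : nat -> S | un @ \oo --> u /\
       exists M : R, forall n, d (un n) u <= M /\ (f (un n) <= M%:E)%E]].

Definition yosida d (tau : R) (f : S -> \bar R) (u : S) : \bar R :=
  ereal_inf [set (f v + (d v u ^+ 2 / (2 * tau))%:E)%E | v in [set: S]].

End Defs.

Definition liminf0 {R : realType} (g : R -> \bar R) : \bar R :=
  ereal_sup [set ereal_inf [set g t | t in [set t : R | 0 < t < delta]]
            | delta in [set delta : R | 0 < delta]].

(* Main.v *)
Require Import Defs.
From HB Require Import structures.
From mathcomp Require Import all_boot all_order all_algebra.
From mathcomp Require Import all_classical all_reals all_analysis.
Import Order.TTheory GRing.Theory Num.Theory.
Import numFieldNormedType.Exports.
Local Open Scope classical_set_scope.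
Local Open Scope ring_scope.
From mathcomp Require Import ring lra.

Section Helpers.
Context {R : realType}.
Local Open Scope ereal_scope.

Lemma einf_sup (u : (\bar R)^nat) : limn_einf u = ereal_sup (range (einfs u)).
Proof. by rewrite limn_einf_lim; apply: cvg_lim => //; exact: cvg_einfs_sup. Qed.

Lemma einf_lt (x : \bar R) (u : (\bar R)^nat) : x < limn_einf u ->
  exists N, forall n, (N <= n)%N -> x < u n.
Proof.
rewrite einf_sup => /ereal_sup_gt [_ [N _ <-]] xN.
exists N => n Nn; apply: (lt_le_trans xN); apply: ereal_inf_lbound.
by exists n.
Qed.

Lemma einf_le (c : \bar R) (u : (\bar R)^nat) : (forall n, u n <= c) -> limn_einf u <= c.
Proof.
move=> H; rewrite einf_sup; apply: ge_ereal_sup => _ [N _ <-].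
apply: (le_trans _ (H N)); apply: ereal_inf_lbound; by exists N => /=.
Qed.

Lemma einf_cst (c : \bar R) : limn_einf (fun _ : nat => c) = c.
Proof. by rewrite (cvg_limn_einf_sup (cvg_cst c)). Qed.

End Helpers.

Lemma seq_right {R : realType} (t : nat -> R) : (forall n, 0 < t n) ->
  t @ \oo --> (0:R) -> t @ \oo --> (0:R)^'+.
Proof.
move=> tpos tcvg P /= HP.
have H := tcvg _ HP; exact: (@filterS _ \oo _ (fun n => 0 < t n -> P (t n)) (fun n => P (t n)) (fun n H => H (tpos n)) H).
Qed.

Lemma incr_ge (h : nat -> nat) : (forall n, (h n < h n.+1)%N) -> forall n, (n <= h n)%N.
Proof. move=> H; elim=> [//|n IH]; exact: leq_ltn_trans IH (H n). Qed.

Lemma harm_small {R : realType} (e : R) : 0 < e -> exists N : nat, forall n, (N <= n)%N -> (n.+1%:R)^-1 < e.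
Proof.
move=> e0; exists (Num.Def.trunc (e^-1)) => n Nn.
have h := truncnS_gt (e^-1).
rewrite -(invrK e) ltf_pV2 ?posrE ?invr_gt0 //.
apply: (lt_le_trans h); by rewrite ler_nat ltnS.
Qed.

Lemma real_aux {R : realType} (a b r D1 D2 D3 e : R) : 0 < r -> 0 < D3 -> D3 < 2*r*e -> 0 <= D1 -> 0 <= D2 -> D2 <= D3 + D1 -> a + D1^+2/(2*r) <= b + D2^+2/(2*r) -> a - b <= (D1/r + e) * D3.
Proof.
move=> r0 D30 D3e D10 D20 D2le H.
have r2 : 0 < 2 * r by rewrite mulr_gt0.
have H2 : (a - b) * (2 * r) <= D2^+2 - D1^+2.
  have ir : 0 < (2*r)^-1 by rewrite invr_gt0.
  rewrite -(ler_pM2r ir) -mulrA divff ?gt_eqF // mulr1.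
  rewrite mulrBl; lra.
have E : (D1 / r + e) * D3 * (2 * r) = 2 * D1 * D3 + 2 * r * e * D3.
  by field; rewrite gt_eqF.
rewrite -(ler_pM2r r2) E.
nra.
Qed.

Lemma slope_min {R : realType} {S : topologicalType} (d : S -> S -> R)
  (Hm : is_metric d) (psi : S -> \bar R) (x v : S) (r : R) :
  0 < r -> psi v \is a fin_num -> (forall w, psi w != -oo%E) ->
  (forall w, (psi v + (d v x ^+ 2 / (2 * r))%:E <= psi w + (d w x ^+ 2 / (2 * r))%:E)%E) ->
  (slope d psi v <= (d v x / r)%:E)%E.
Proof.
move=> r0 fv nNy Hmin.
case: Hm => d0 dxy dsym dtri.
rewrite /slope.
have -> : (psi v == +oo%E) = false by move: fv; case: (psi v).
have [a Ha] : exists a, psi v = a%:E by move: fv; case: (psi v) => // a; exists a.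
apply/lee_addgt0Pr => e e0.
have re0 : 0 < 2 * r * e by rewrite !mulr_gt0.
apply: (le_trans (ereal_inf_lbound _)); first by exists (2 * r * e).
have D0 : 0 <= d v x / r + e.
  by rewrite addr_ge0 ?divr_ge0 ?d0 // ltW.
apply: ge_ereal_sup => z [-> | [w /andP [w0 wr] <-]].
  by rewrite -EFinD lee_fin.
have := Hmin w; rewrite Ha.
case Hw: (psi w) => [b | | ].
- move=> H; rewrite -!EFinD lee_fin in H.
  rewrite -EFinB -EFin_max -EFinM lee_fin.
  rewrite ler_pdivrMr //.
  rewrite ge_max; apply/andP; split; last by rewrite mulr_ge0 // ltW.
  apply: (real_aux _ _ _ _ _ _ _ r0 w0 wr (d0 v x) (d0 w x) _ H).
  by rewrite (dsym v w); exact: dtri.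
- move=> _; rewrite /= .
  have -> : maxe -oo%E 0%E = (0 : \bar R) by apply/max_idPr; exact: leNye.
  by rewrite mul0e -EFinD lee_fin.
- by move: (nNy w); rewrite Hw.
Qed.

Lemma real_aux2 {R : realType} (al be a b y r eta t : R) : 0 < r -> 0 < eta -> 0 <= be -> 0 <= b ->
  al - eta < a -> be - eta < b -> a + b^+2/(2*r) < y + t -> t < eta ->
  al + be^+2/(2*r) <= y + eta * (2 + be / r).
Proof.
move=> r0 e0 be0 b0 h1 h2 h3 h4.
have r2 : 0 < 2 * r by rewrite mulr_gt0.
have hb : be^+2 - 2 * be * eta <= b^+2.
  have [le|lt] := leP eta be; nra.
have E1 : b^+2/(2*r) * (2 * r) = b^+2 by rewrite divfK ?gt_eqF.
have E2 : be^+2/(2*r) * (2 * r) = be^+2 by rewrite divfK ?gt_eqF.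
have E3 : (eta * (2 + be / r)) * (2 * r) = 4 * eta * r + 2 * eta * be.
  by field; rewrite gt_eqF.
rewrite -(ler_pM2r r2) [X in X <= _]mulrDl [X in _ <= X]mulrDl E2 E3.
have h3' : (a + b^+2/(2*r)) * (2 * r) < (y + t) * (2 * r) by rewrite ltr_pM2r.
rewrite [X in X < _]mulrDl [X in _ < X]mulrDl E1 in h3'.
nra.
Qed.

Lemma minex {R : realType} {S : topologicalType} (d : S -> S -> R)
 (Hm : is_metric d)
 (Hc1 : forall (u v : nat -> S) (x y : S), u @ \oo --> x -> v @ \oo --> y ->
     ((d x y)%:E <= limn_einf (fun n => (d (u n) (v n))%:E))%E)
 (psi : S -> \bar R) (x u ustar : S) (A B M r : R) :
 0 < B -> 0 < r -> 8 * B * r <= 1 ->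
 (forall v, psi v != -oo%E) ->
 (forall v, ((- A - B * d v ustar ^+ 2)%:E <= psi v)%E) ->
 (psi x <= M%:E)%E -> d x u <= M ->
 (forall (un : nat -> S) (w : S), (exists M : R, forall n m, d (un n) (un m) <= M) ->
     un @ \oo --> w -> (psi w <= limn_einf (fun n => psi (un n)))%E) ->
 (forall un : nat -> S, (exists M : R, forall n m, d (un n) (un m) <= M /\ (psi (un n) <= M%:E)%E) ->
     exists (h : nat -> nat) (w : S), (forall n, (h n < h n.+1)%N) /\ (fun n => un (h n)) @ \oo --> w) ->
 exists v, psi v \is a fin_num /\ forall w,
   (psi v + (d v x ^+ 2 / (2 * r))%:E <= psi w + (d w x ^+ 2 / (2 * r))%:E)%E.
Proof.
move=> B0 r0 Br nNy Hlow HxM HxuM Hlsc Hcpt.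
case: Hm => d0 dxy dsym dtri.
have r2 : 0 < 2 * r by rewrite mulr_gt0.
pose q w := d w x ^+ 2 / (2 * r).
have q0 : forall w, 0 <= q w by move=> w; rewrite /q divr_ge0 // ?exprn_ge0 // ltW.
pose C := M + d u ustar.
pose K := A + 2 * B * C ^+ 2.
have dC : forall v, d v ustar <= d v x + C.
  move=> v; have := dtri v x ustar; have := dtri x u ustar; rewrite /C; lra.
have lowb : forall v, ((- K + 2 * B * d v x ^+ 2)%:E <= psi v + (q v)%:E)%E.
  move=> v; apply: (le_trans _ (leeD (Hlow v) (lexx _))); rewrite -EFinD lee_fin.
  have hq : 4 * B * d v x ^+ 2 <= q v.
    rewrite /q ler_pdivlMr //.
    have : 0 <= d v x ^+ 2 by rewrite exprn_ge0.
    nra.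
  have h1 := dC v; have h2 := d0 v ustar; have h3 := d0 v x.
  have h4 : d v ustar ^+ 2 <= 2 * d v x ^+ 2 + 2 * C ^+ 2.
    have h5 : d v ustar ^+ 2 <= (d v x + C) ^+ 2.
      by rewrite ler_pXn2r // ?nnegrE // (le_trans h2 h1).
    apply: (le_trans h5); have := sqr_ge0 (d v x - C); rewrite !expr2; nra.
  have h6 := ler_wpM2l (ltW B0) h4.
  rewrite /K; lra.
pose Y := yosida d r psi x.
have YM : (Y <= psi x)%E.
  apply: ereal_inf_lbound; exists x => //.
  by rewrite (dxy x x).2 // expr2 mul0r mul0r adde0.
have YK : ((- K)%:E <= Y)%E.
  apply: le_ereal_inf_tmp => _ [v _ <-]; apply: le_trans (lowb v).
  by rewrite lee_fin lerDl mulr_ge0 ?exprn_ge0 // mulr_ge0 // ltW.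
have [y HY] : exists y, Y = y%:E.
  move: YK (le_trans YM HxM); case E: Y => [y| |] // _ _; by exists y.
have Hy : y <= M by rewrite -lee_fin -HY (le_trans YM HxM).
have Hex : forall n : nat, exists w, (psi w + (q w)%:E < (y + (n.+1%:R)^-1)%:E)%E.
  move=> n.
  have : (Y < (y + (n.+1%:R)^-1)%:E)%E by rewrite HY lte_fin ltrDl invr_gt0 ltr0n.
  by move=> /ereal_inf_lt [_ [w _ <-] H]; exists w.
have [ws Hws] := choice Hex.
pose D2 := (M + 1 + K) / (2 * B).
have B2 : 0 < 2 * B by rewrite mulr_gt0.
have bd : forall n, d (ws n) x ^+ 2 <= D2 /\ (psi (ws n) <= (M + 1)%:E)%E.
  move=> n.
  have h1 : (psi (ws n) + (q (ws n))%:E < (M + 1)%:E)%E.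
    apply: (lt_le_trans (Hws n)); rewrite lee_fin lerD //.
    by rewrite invf_le1 ?ltr0n // ler1n.
  split.
    have := le_lt_trans (lowb (ws n)) h1; rewrite lte_fin => h2.
    rewrite /D2 ler_pdivlMr //; lra.
  apply: (le_trans _ (ltW h1)); by rewrite leeDl // lee_fin.
have dle : forall v, d v x <= 1 + d v x ^+ 2 by move=> v; nra.
have pw : forall n m, d (ws n) (ws m) <= 2 * (1 + D2).
  move=> n m; apply: (le_trans (dtri _ x _)); rewrite (dsym x).
  have := dle (ws n); have := dle (ws m); have := (bd n).1; have := (bd m).1; lra.
pose M' := Num.max (2 * (1 + D2)) (M + 1).
have [h [v [hinc cv]]] : exists (h : nat -> nat) (w : S), (forall n, (h n < h n.+1)%N) /\ (fun n => ws (h n)) @ \oo --> w.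
  apply: Hcpt; exists M' => n m; split.
    by apply: (le_trans (pw n m)); rewrite le_max lexx.
  by apply: (le_trans (bd n).2); rewrite lee_fin le_max lexx orbT.
have L1 : (psi v <= limn_einf (fun n => psi (ws (h n))))%E.
  by apply: Hlsc cv; exists (2 * (1 + D2)) => n m; exact: pw.
have L2 : ((d v x)%:E <= limn_einf (fun n => (d (ws (h n)) x)%:E))%E.
  exact: (Hc1 (fun n => ws (h n)) (fun _ => x) v x cv (cvg_cst x)).
have vM : (psi v <= (M + 1)%:E)%E.
  apply: (le_trans L1); apply: einf_le => n; exact: (bd (h n)).2.
have [al Hal] : exists al, psi v = al%:E.
  move: (nNy v) vM; case: (psi v) => // al _ _; by exists al.
exists v; split; first by rewrite Hal.
move=> w.
have Hin : [set (psi v0 + (d v0 x ^+ 2 / (2 * r))%:E)%E | v0 in [set: S]] (psi w + (q w)%:E)%E.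
  by exists w.
apply: (le_trans _ (ereal_inf_lbound Hin)).
rewrite (_ : ereal_inf _ = Y) // HY Hal -EFinD lee_fin.
pose be := d v x.
have be0 : 0 <= be := d0 v x.
apply/ler_addgt0Pr => e e0.
have k0 : 0 < 2 + be / r by rewrite ltr_wpDr // divr_ge0 // ltW.
pose eta := e / (2 + be / r).
have eta0 : 0 < eta by rewrite divr_gt0.
have [N1 HN1] : exists N, forall n, (N <= n)%N -> ((al - eta)%:E < psi (ws (h n)))%E.
  apply: einf_lt; apply: (lt_le_trans _ L1); by rewrite Hal lte_fin ltrBlDr ltrDl.
have [N2 HN2] : exists N, forall n, (N <= n)%N -> ((be - eta)%:E < (d (ws (h n)) x)%:E)%E.
  apply: einf_lt; apply: (lt_le_trans _ L2); by rewrite lte_fin ltrBlDr ltrDl.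
have [N3 HN3] := @harm_small _ eta eta0.
pose n := (N1 + N2 + N3)%N.
have hn : (n <= h n)%N := incr_ge _ hinc n.
have n1 : (N1 <= n)%N by rewrite /n -addnA leq_addr.
have n2 : (N2 <= n)%N by rewrite /n addnAC leq_addl.
have t1 := HN1 n n1.
have t2 := HN2 n n2.
have t3 := HN3 (h n) (leq_trans (leq_addl _ _) hn).
have t4 := Hws (h n).
move: t1 t4; case Hp: (psi (ws (h n))) => [a| |] //.
rewrite lte_fin => t1; rewrite -EFinD lte_fin => t4.
rewrite lte_fin in t2.
have := real_aux2 _ _ _ _ _ _ _ _ r0 eta0 be0 (d0 _ _) t1 t2 t4 t3.
by rewrite /eta divfK // gt_eqF.
Qed.

Lemma final {R : realType} (s rs L : \bar R) : (0 <= rs)%E -> (rs <= s)%E -> (0 <= L)%E ->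
  (forall sg : R, 0 <= sg -> (sg%:E < s)%E -> ((sg^+2/2)%:E <= L)%E) ->
  ((2^-1)%:E * (rs * rs) <= L)%E.
Proof.
move=> rs0 rss L0 H.
case EL: L L0 => [l| |] // L0; last by rewrite leey.
rewrite lee_fin in L0.
move: rs0 rss; case: rs => [rho| |] // rho0 rhos.
  rewrite -!EFinM lee_fin; rewrite lee_fin in rho0.
  rewrite leNgt; apply/negP => lt.
  have rp : 0 < rho by nra.
  pose th := (rho^+2 - 2 * l) / (4 * rho).
  have th4 : th * (4 * rho) = rho^+2 - 2 * l by rewrite divfK // gt_eqF // mulr_gt0.
  have th0 : 0 < th by rewrite divr_gt0 ?mulr_gt0 //; nra.
  have thr : th <= rho by nra.
  have := H (rho - th); rewrite subr_ge0 thr => /(_ isT).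
  have -> : ((rho - th)%:E < s)%E.
    by apply: (lt_le_trans _ rhos); rewrite lte_fin ltrBlDr ltrDl.
  move=> /(_ isT); rewrite EL lee_fin => h.
  have : (rho - th)^+2 <= 2 * l by lra.
  nra.
move: rhos; rewrite leye_eq => /eqP Hs.
exfalso; have := H (l + 1); rewrite Hs ltey addr_ge0 // => /(_ isT isT); rewrite EL lee_fin => h.
have : (l + 1)^+2 <= 2 * l by lra.
nra.
Qed.

Lemma einf_ge {R : realType} (c : \bar R) (u : (\bar R)^nat) : (forall n, c <= u n)%E -> (c <= limn_einf u)%E.
Proof.
move=> H; rewrite einf_sup; apply: (le_trans _ (ereal_sup_ubound _)); last by exists 0%N.
apply: le_ereal_inf_tmp => _ [n _ <-]; exact: H.
Qed.

Lemma slope_ge0 {R : realType} {S : topologicalType} (d : S -> S -> R) (f : S -> \bar R) v :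
  (0 <= slope d f v)%E.
Proof.
rewrite /slope; case: ifP => _; first by rewrite leey.
apply: le_ereal_inf_tmp => _ [r _ <-]; apply: ereal_sup_ubound; by left.
Qed.

Lemma yos_le {R : realType} {S : topologicalType} (d : S -> S -> R) (Hm : is_metric d)
  (psi : S -> \bar R) x r : (yosida d r psi x <= psi x)%E.
Proof.
case: Hm => _ dxy _ _.
apply: ereal_inf_lbound; exists x => //.
by rewrite (dxy x x).2 // expr2 mul0r mul0r adde0.
Qed.

Lemma yos_min {R : realType} {S : topologicalType} (d : S -> S -> R)
  (psi : S -> \bar R) x r v :
  (forall w, (psi v + (d v x ^+ 2 / (2 * r))%:E <= psi w + (d w x ^+ 2 / (2 * r))%:E)%E) ->
  yosida d r psi x = (psi v + (d v x ^+ 2 / (2 * r))%:E)%E.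
Proof.
move=> H; apply/eqP; rewrite eq_le; apply/andP; split.
  by apply: ereal_inf_lbound; exists v.
by apply: le_ereal_inf_tmp => _ [w _ <-]; exact: H.
Qed.

Lemma real_aux4 {R : realType} (c sg lam r p yr a D : R) : 0 < r -> 0 < lam -> lam < 1 -> 0 <= sg ->
 sg * (lam * r) <= D ->
 yr <= a + D^+2/(2*r) -> c <= (p - (a + D^+2/(2*(lam*r)))) / (lam * r) ->
 lam * c + sg^+2 * lam * (1 - lam) / 2 <= (p - yr) / r.
Proof.
move=> r0 l0 l1 sg0 hD hy hc.
have lr : 0 < lam * r by rewrite mulr_gt0.
rewrite ler_pdivlMr // in hc.
rewrite ler_pdivlMr //.
set Q1 := D^+2/(2*r) in hy *.
set Q2 := D^+2/(2*(lam*r)) in hc *.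
have e1 : Q1 * (2 * r) = D^+2 by rewrite /Q1 divfK // gt_eqF // mulr_gt0.
have e2 : Q2 * (2 * (lam * r)) = D^+2 by rewrite /Q2 divfK // gt_eqF // mulr_gt0.
have hd2 : (sg * (lam * r))^+2 <= D^+2.
  by rewrite ler_pXn2r // ?nnegrE // ?(le_trans _ hD) // mulr_ge0 // ltW.
have key : sg^+2 * lam * (1 - lam) / 2 * r <= Q2 - Q1.
  have p2 : 0 < 2 * (lam * r) by rewrite mulr_gt0.
  rewrite -(ler_pM2r p2).
  have -> : (Q2 - Q1) * (2 * (lam * r)) = D^+2 * (1 - lam).
    rewrite mulrBl e2.
    have -> : Q1 * (2 * (lam * r)) = lam * (Q1 * (2 * r)) by ring.
    by rewrite e1; ring.
  have -> : sg ^+ 2 * lam * (1 - lam) / 2 * r * (2 * (lam * r)) = (sg * (lam * r))^+2 * (1 - lam).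
    by field.
  by rewrite ler_pM2r // subr_gt0.
have : lam * c * r + sg^+2 * lam * (1 - lam) / 2 * r <= p - yr.
  have : lam * c * r = c * (lam * r) by ring.
  lra.
by rewrite mulrDl.
Qed.
Lemma real_aux5 {R : realType} (k c : R) : 0 <= k -> 0 <= c ->
  (forall lam, 0 < lam -> lam < 1 -> lam * c + k * lam * (1 - lam) <= c) -> k <= c.
Proof.
move=> k0 c0 H; rewrite leNgt; apply/negP => ck.
have kp : 0 < k by lra.
pose lam := (c / k + 1) / 2.
have ck1 : c / k < 1 by rewrite ltr_pdivrMr // mul1r.
have ck0 : 0 <= c / k by rewrite divr_ge0 // ltW.
have := H lam; rewrite /lam => /(_ ltac:(lra) ltac:(lra)) h.
have e : c / k * k = c by rewrite divfK // gt_eqF.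
set t := c / k in ck1 ck0 h e.
rewrite -e in h.
have h2 : (t + 1) / 2 * (t * k) + k * ((t + 1) / 2) * (1 - (t + 1) / 2) - t * k =
  (1 - (t + 1) / 2) * (k * ((t + 1) / 2) - t * k) by ring.
have h3 : 0 < (1 - (t + 1) / 2) * (k * ((t + 1) / 2) - t * k).
  apply: mulr_gt0; first lra.
  have -> : k * ((t + 1) / 2) - t * k = k * ((1 - t) / 2) by field.
  apply: mulr_gt0 => //; lra.
lra.

Qed.
Theorem proposition5p2 (R : realType) (S : topologicalType) (d : S -> S -> R)
  (phi : S -> \bar R) (phie : R -> S -> \bar R) (A B : R) (ustar : S)
  (Hmetric : is_metric d) (Hcomplete : d_complete d)
  (Hhaus : hausdorff_space S) (Hcompat : sigma_compatible d)
  (Hphi_range : forall v, phi v != -oo%E)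
  (Hphie_range : forall eps, 0 < eps -> forall v, phie eps v != -oo%E)
  (Hphi_dom : exists v, (phi v < +oo)%E)
  (Hphie_dom : forall eps, 0 < eps -> exists v, (phie eps v < +oo)%E)
  (HA : 0 < A) (HB : 0 < B)
  (Hlow : forall eps, 0 < eps -> forall v,
     ((- A - B * d v ustar ^+ 2)%:E <= phie eps v)%E)
  (Hlsc : forall eps, 0 < eps -> forall (un : nat -> S) (u : S),
     (exists M : R, forall n m, d (un n) (un m) <= M) ->
     un @ \oo --> u ->
     (phie eps u <= limn_einf (fun n => phie eps (un n)))%E)
  (Hcpt : forall eps, 0 < eps -> forall un : nat -> S,
     (exists M : R, forall n m, d (un n) (un m) <= M /\ (phie eps (un n) <= M%:E)%E) ->
     exists (h : nat -> nat) (u : S),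
       (forall n, (h n < h n.+1)%N) /\ (fun n => un (h n)) @ \oo --> u)
  (Hslope : forall (epsn : nat -> R) (un : nat -> S) (u : S),
     (forall n, 0 < epsn n) -> epsn @ \oo --> (0 : R) -> un @ \oo --> u ->
     (slope d phi u <= limn_einf (fun n => slope d (phie (epsn n)) (un n)))%E)
  (eps : R -> R) (Heps_pos : forall tau, 0 < tau -> 0 < eps tau)
  (Heps_lim : eps @ 0^'+ --> (0 : R)) :
  forall (u : S) (ut : R -> S),
    ut @ 0^'+ --> u ->
    (exists M : R, forall tau, 0 < tau ->
       (phie (eps tau) (ut tau) <= M%:E)%E /\ d (ut tau) u <= M) ->
    ((2^-1)%:E * (relaxed_slope d phi u * relaxed_slope d phi u)
      <= liminf0 (fun tau =>
           (phie (eps tau) (ut tau) - yosida d tau (phie (eps tau)) (ut tau))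
             * (tau^-1)%:E))%E.
Proof.
move=> u ut Hut [M HM].
have Hm := Hmetric.
case: Hmetric => d0 dxy dsym dtri.
have Hc1 := Hcompat.1; have Hc2 := Hcompat.2.
have psiF : forall tau, 0 < tau -> exists p, phie (eps tau) (ut tau) = p%:E.
  move=> tau t0; have := (HM tau t0).1; have := Hphie_range _ (Heps_pos _ t0) (ut tau).
  by case: (phie _ _) => // p _ _; exists p.
apply: (@final _ (slope d phi u)).
- apply: le_ereal_inf_tmp => _ [un _ <-]; apply: einf_ge => n; exact: slope_ge0.
- case Hpu: (phi u) => [a| |].
  + apply: ereal_inf_lbound; exists (fun _ => u); last by rewrite einf_cst.
    split; first exact: cvg_cst.
    exists (Num.max 0 a) => n; split.
      by rewrite (dxy u u).2 // le_max lexx.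
    by rewrite Hpu lee_fin le_max lexx orbT.
  + by rewrite /slope Hpu eqxx leey.
  + by move: (Hphi_range u); rewrite Hpu.
- apply: (le_trans _ (ereal_sup_ubound _)); last by exists 1 => //=.
  apply: le_ereal_inf_tmp => _ [t /andP [t0 _] <-].
  apply: mule_ge0; last by rewrite lee_fin invr_ge0 ltW.
  have [p Hp] := psiF t t0.
  have := yos_le d Hm (phie (eps t)) (ut t) t; rewrite Hp => h.
  by rewrite sube_ge0 ?orbT.
move=> sg sg0 sgs.
have key : exists2 d1, 0 < d1 & forall tau r v, 0 < tau -> tau < d1 -> 0 < r -> r <= tau ->
    phie (eps tau) v \is a fin_num ->
    (forall w, (phie (eps tau) v + (d v (ut tau) ^+ 2 / (2 * r))%:E <=
                phie (eps tau) w + (d w (ut tau) ^+ 2 / (2 * r))%:E)%E) ->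
    sg * r <= d v (ut tau).
  case: (pselect (exists2 d1, 0 < d1 & forall tau r v, 0 < tau -> tau < d1 -> 0 < r -> r <= tau ->
    phie (eps tau) v \is a fin_num ->
    (forall w, (phie (eps tau) v + (d v (ut tau) ^+ 2 / (2 * r))%:E <=
                phie (eps tau) w + (d w (ut tau) ^+ 2 / (2 * r))%:E)%E) ->
    sg * r <= d v (ut tau))) => // Hn.
  exfalso.
  have Hf : forall n : nat, exists p : R * R * S,
     0 < p.1.1 /\ p.1.1 < harmonic n /\ 0 < p.1.2 /\ p.1.2 <= p.1.1 /\
     phie (eps p.1.1) p.2 \is a fin_num /\
     (forall w, (phie (eps p.1.1) p.2 + (d p.2 (ut p.1.1) ^+ 2 / (2 * p.1.2))%:E <=
                phie (eps p.1.1) w + (d w (ut p.1.1) ^+ 2 / (2 * p.1.2))%:E)%E) /\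
     d p.2 (ut p.1.1) < sg * p.1.2.
    move=> n; case: (pselect (exists p : R * R * S,
     0 < p.1.1 /\ p.1.1 < harmonic n /\ 0 < p.1.2 /\ p.1.2 <= p.1.1 /\
     phie (eps p.1.1) p.2 \is a fin_num /\
     (forall w, (phie (eps p.1.1) p.2 + (d p.2 (ut p.1.1) ^+ 2 / (2 * p.1.2))%:E <=
                phie (eps p.1.1) w + (d w (ut p.1.1) ^+ 2 / (2 * p.1.2))%:E)%E) /\
     d p.2 (ut p.1.1) < sg * p.1.2)) => // Hp.
    exfalso; apply: Hn; exists (harmonic n); first exact: harmonic_gt0.
    move=> tau r v h1 h2 h3 h4 h5 h6; rewrite leNgt; apply/negP => h7.
    by apply: Hp; exists (tau, r, v).
  have [f Hf'] := choice Hf.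
  pose ts n := (f n).1.1; pose rs n := (f n).1.2; pose vs n := (f n).2.
  have t0 : forall n, 0 < ts n by move=> n; case: (Hf' n).
  have tcv : ts @ \oo --> (0:R).
    apply: (squeeze_cvgr _ (cvg_cst (0:R)) (@cvg_harmonic R)).
    apply: nearW => n; rewrite ltW ?t0 //=; by case: (Hf' n) => _ [/ltW].
  have tr := seq_right _ t0 tcv.
  have ecv : (eps \o ts) @ \oo --> (0:R) by apply: cvg_comp; [exact: tr | exact: Heps_lim].
  have ucv : (ut \o ts) @ \oo --> u by apply: cvg_comp; [exact: tr | exact: Hut].
  have dcv : (fun n => d ((ut \o ts) n) (vs n)) @ \oo --> (0:R).
    have sc : (fun n => sg * ts n) @ \oo --> (0:R).
      by rewrite -(mulr0 sg); apply: cvgMl_tmp.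
    apply: (squeeze_cvgr _ (cvg_cst (0:R)) sc).
    apply: nearW => n; rewrite d0 /=.
    case: (Hf' n) => _ [_ [_ [h4 [_ [_ h7]]]]].
    rewrite dsym; apply: (le_trans (ltW h7)); by rewrite ler_wpM2l.
  have vcv := Hc2 _ _ _ dcv ucv.
  have := Hslope (eps \o ts) vs u (fun n => Heps_pos _ (t0 n)) ecv vcv.
  have : (limn_einf (fun n => slope d (phie ((eps \o ts) n)) (vs n)) <= sg%:E)%E.
    apply: einf_le => n.
    case: (Hf' n) => h1 [_ [h3 [_ [h5 [h6 h7]]]]].
    apply: (le_trans (slope_min _ Hm _ _ _ _ h3 h5 (Hphie_range _ (Heps_pos _ h1)) h6)).
    by rewrite lee_fin ler_pdivrMr // ltW.
  move=> h1 h2; have := lt_le_trans sgs (le_trans h2 h1); by rewrite ltxx.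
have [d1 d10 Hkey] := key.
pose del := Num.min d1 (8 * B)^-1.
have B8 : 0 < 8 * B by rewrite mulr_gt0.
have del0 : 0 < del by rewrite lt_min d10 invr_gt0 B8.
have deld1 : del <= d1 by rewrite ge_min lexx.
have delB : 8 * B * del <= 1.
  have hd : del <= (8 * B)^-1 by rewrite ge_min lexx orbT.
  have B8n : 8 * B != 0 by rewrite gt_eqF.
  by apply: (le_trans (ler_wpM2l (ltW B8) hd)); rewrite divff.
have mex : forall tau r, 0 < tau -> tau < del -> 0 < r -> r <= tau ->
    exists v, phie (eps tau) v \is a fin_num /\ forall w,
    (phie (eps tau) v + (d v (ut tau) ^+ 2 / (2 * r))%:E <=
     phie (eps tau) w + (d w (ut tau) ^+ 2 / (2 * r))%:E)%E.
  move=> tau r t0 td r0 rt.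
  have e0 := Heps_pos _ t0.
  apply: (minex _ Hm Hc1 (phie (eps tau)) (ut tau) u ustar A B M r) => //.
  - apply: (le_trans _ delB); rewrite ler_pM2l //; apply: (le_trans rt); exact: ltW.
  - exact: Hphie_range.
  - exact: Hlow.
  - exact: (HM tau t0).1.
  - exact: (HM tau t0).2.
  - exact: Hlsc.
  - exact: Hcpt.
have yF : forall tau r, 0 < tau -> tau < del -> 0 < r -> r <= tau ->
    exists y, yosida d r (phie (eps tau)) (ut tau) = y%:E.
  move=> tau r t0 td r0 rt; have [v [fv mv]] := mex tau r t0 td r0 rt.
  rewrite (yos_min _ _ _ _ _ mv) -(fineK fv) -EFinD; by eexists.
pose G tau r := fine (phie (eps tau) (ut tau)) - fine (yosida d r (phie (eps tau)) (ut tau)).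
pose E := [set z : R | exists tau r, [/\ 0 < tau, tau < del, 0 < r, r <= tau & z = G tau r / r]].
have G0 : forall tau r, 0 < tau -> tau < del -> 0 < r -> r <= tau -> 0 <= G tau r.
  move=> tau r t0 td r0 rt; have [y Hy] := yF tau r t0 td r0 rt.
  have [p Hp] := psiF tau t0.
  have := yos_le d Hm (phie (eps tau)) (ut tau) r.
  by rewrite /G Hy Hp lee_fin /= subr_ge0.
have Elb : lbound E 0.
  move=> _ [tau [r [t0 td r0 rt ->]]]; by rewrite divr_ge0 // ?G0 // ltW.
have Ene : E !=set0.
  have h0 : 0 < del / 2 by rewrite divr_gt0.
  have h1 : del / 2 < del by rewrite ltr_pdivrMr // ltr_pMr // ltr1n.
  by exists (G (del / 2) (del / 2) / (del / 2)); exists (del / 2), (del / 2); split.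
pose c := inf E.
have cE : forall z, E z -> c <= z by apply: ge_inf; exists 0.
have c0 : 0 <= c := lb_le_inf Ene Elb.
have step : forall lam, 0 < lam -> lam < 1 -> lam * c + (sg ^+ 2 / 2) * lam * (1 - lam) <= c.
  move=> lam l0 l1; rewrite {2}/c; apply: (lb_le_inf Ene) => _ [tau [r [t0 td r0 rt ->]]].
  have lr0 : 0 < lam * r by rewrite mulr_gt0.
  have lrt : lam * r <= tau by apply: (le_trans _ rt); rewrite ler_piMl // ?ltW.
  have [v [fv mv]] := mex tau (lam * r) t0 td lr0 lrt.
  have hD := Hkey tau (lam * r) v t0 (lt_le_trans td deld1) lr0 lrt fv mv.
  have Yl := yos_min _ _ _ _ _ mv.
  have Yr : (yosida d r (phie (eps tau)) (ut tau) <=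
             phie (eps tau) v + (d v (ut tau) ^+ 2 / (2 * r))%:E)%E.
    by apply: ereal_inf_lbound; exists v.
  have cl : c <= G tau (lam * r) / (lam * r).
    by apply: cE; exists tau, (lam * r); split.
  have [y Hy] := yF tau r t0 td r0 rt.
  have [p Hp] := psiF tau t0.
  have [a Ha] : exists a, phie (eps tau) v = a%:E by exists (fine (phie (eps tau) v)); rewrite fineK.
  rewrite /G Yl Hp Ha -EFinD /= in cl.
  rewrite Hy Ha -EFinD lee_fin in Yr.
  have := real_aux4 _ _ _ _ _ _ _ _ r0 l0 l1 sg0 hD Yr cl.
  rewrite /G Hp Hy /=.
  by have -> : sg ^+ 2 / 2 * lam * (1 - lam) = sg ^+ 2 * lam * (1 - lam) / 2 by ring.
have ck : sg ^+ 2 / 2 <= c.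
  apply: real_aux5 => //; by rewrite divr_ge0 // sqr_ge0.
apply: (le_trans _ (ereal_sup_ubound _)); last by exists del => //=.
apply: le_ereal_inf_tmp => _ [t /andP [t0 td] <-].
have [y Hy] := yF t t t0 td t0 (lexx t).
have [p Hp] := psiF t t0.
have Gt : c <= G t t / t by apply: cE; exists t, t; split.
rewrite /G Hy Hp /= in Gt.
rewrite /= Hy Hp -EFinB -EFinM lee_fin.
exact: (le_trans ck Gt).
Qed.
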